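(* Let $A$ be a lattice generated by a finite set $X$ of join prime elements and satisfying Whitman's condition (W), let $B$ be a lattice with finite generating set $Y$, and let $g\colon A\to D$, $h\colon B\to D$ be epimorphisms onto a lattice $D$. Let $C=\{(a,b)\in A\times B: g(a)=h(b)\}$. Then for each finite subset $Z\subseteq C$ there exists $N\in\mathbb N$ such that for all $(a,b)$ in the sublattice $\langle Z\rangle$ generated by $Z$, all $k\in\mathbb N$ and all $w\in H_{X,k}$: if $a\ge w$ then $b\ge\beta_{h,k+N}(g(w))$ (where $\beta_{h,j}$ is computed with respect to $Y$).
   Context: Whitman's condition (W): for all finite $S,T$, if $\bigwedge S\le\bigvee T$ then some $s\in S$ has $s\le\bigvee T$ or some $t\in T$ has $\bigwedge S\le t$. An element $p$ is join prime if $p\le x\vee y$ implies $p\le x$ or $p\le y$. For a lattice with finite generating set $X$ and a subset $W$, let $W^\wedge:=\{\bigwedge U: U\subseteq W\text{ finite}\}$, $W^\vee:=\{\bigvee U: U\subseteq W\text{ finite}\}$ with conventions $\bigwedge\emptyset:=\bigvee X$, $\bigvee\emptyset:=\bigwedge X$; $G_{X,0}:=X$, $H_{X,k}:=G_{X,k}^\wedge$, $G_{X,k+1}:=H_{X,k}^\vee$. For the epimorphism $h\colon B\to D$ and $d\in D$: $\beta_{h,k}(d):=\bigwedge\{w\in H_{Y,k}: h(w)\ge d\}$. *)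

(* Defs.v *)
(* lattices are mathcomp's [latticeType d] (no top/bottom assumed). *)
From HB Require Import structures.
From mathcomp Require Import all_boot all_order.
Set Implicit Arguments. Unset Strict Implicit. Unset Printing Implicit Defensive.
Import Order.LTheory.
Local Open Scope order_scope.

Inductive gen_by (T : Type) (m j : T -> T -> T) (S : T -> Prop) : T -> Prop :=
  | gen_base x : S x -> gen_by m j S x
  | gen_meet x y : gen_by m j S x -> gen_by m j S y -> gen_by m j S (m x y)
  | gen_join x y : gen_by m j S x -> gen_by m j S y -> gen_by m j S (j x y).

Section LatticeDefs.
Context {d : Order.disp_t} (L : latticeType d).

Definition generates (X : seq L) : Prop :=
  forall a : L, gen_by Order.meet Order.join (fun x => x \in X) a.

Definition ne_meet (s : seq L) : option L :=
  if s is x :: s' then Some (foldr Order.meet x s') else None.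
Definition ne_join (s : seq L) : option L :=
  if s is x :: s' then Some (foldr Order.join x s') else None.

Definition whitman : Prop :=
  forall (s0 t0 : L) (S T : seq L),
    foldr Order.meet s0 S <= foldr Order.join t0 T ->
    (exists2 s, s \in s0 :: S & s <= foldr Order.join t0 T) \/
    (exists2 t, t \in t0 :: T & foldr Order.meet s0 S <= t).

Definition join_prime (p : L) : Prop :=
  forall x y : L, p <= x `|` y -> p <= x \/ p <= y.

(* Big meet / join with the conventions  /\ [::] := \/ X,  \/ [::] := /\ X. *)
Definition bmeet (X U : seq L) : option L :=
  if U is [::] then ne_join X else ne_meet U.
Definition bjoin (X U : seq L) : option L :=
  if U is [::] then ne_meet X else ne_join U.

End LatticeDefs.

(* All subsequences of a list: these represent all finite subsets of the
   finite set listed by the list. *)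
Fixpoint subseqs (T : Type) (s : seq T) : seq (seq T) :=
  match s with
  | [::] => [:: [::]]
  | x :: s' => let r := subseqs s' in [seq x :: t | t <- r] ++ r
  end.

Section Levels.
Context {d : Order.disp_t} (L : latticeType d) (X : seq L).

Definition meets_of (W : seq L) : seq L := pmap (bmeet X) (subseqs W).
Definition joins_of (W : seq L) : seq L := pmap (bjoin X) (subseqs W).

Fixpoint Gs (k : nat) : seq L :=
  if k is k'.+1 then joins_of (meets_of (Gs k')) else X.
Definition Hs (k : nat) : seq L := meets_of (Gs k).

End Levels.

Definition lattice_hom {d1 d2 : Order.disp_t} {L1 : latticeType d1}
  {L2 : latticeType d2} (f : L1 -> L2) : Prop :=
  (forall x y, f (x `&` y) = f x `&` f y) /\ (forall x y, f (x `|` y) = f x `|` f y).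
Definition epimorphism {d1 d2 : Order.disp_t} {L1 : latticeType d1}
  {L2 : latticeType d2} (f : L1 -> L2) : Prop :=
  lattice_hom f /\ forall y, exists x, f x = y.

Definition beta {dB dD : Order.disp_t} {B : latticeType dB} {D : latticeType dD}
  (Y : seq B) (h : B -> D) (k : nat) (dd : D) : option B :=
  bmeet Y [seq w <- Hs Y k | dd <= h w].

Definition pmeet {dA dB : Order.disp_t} {A : latticeType dA} {B : latticeType dB}
  (u v : A * B) : A * B := (u.1 `&` v.1, u.2 `&` v.2).
Definition pjoin {dA dB : Order.disp_t} {A : latticeType dA} {B : latticeType dB}
  (u v : A * B) : A * B := (u.1 `|` v.1, u.2 `|` v.2).
Definition sublat_gen {dA dB : Order.disp_t} {A : latticeType dA} {B : latticeType dB}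
  (Z : seq (A * B)) : A * B -> Prop :=
  gen_by pmeet pjoin (fun z => z \in Z).

(* Main.v *)
Require Import Defs.
From HB Require Import structures.
From mathcomp Require Import all_boot all_order.
Set Implicit Arguments. Unset Strict Implicit. Unset Printing Implicit Defensive.
Import Order.LTheory.
Local Open Scope order_scope.

Lemma le_foldr_meetE {d} {L : latticeType d} (z x : L) (s : seq L) :
  (z <= foldr Order.meet x s) = all (fun y => z <= y) (x :: s).
Proof.
elim: s => [|y s IH] /=; first by rewrite andbT.
by rewrite lexI IH /= andbCA.
Qed.

Lemma le_foldr_joinE {d} {L : latticeType d} (z x : L) (s : seq L) :
  (foldr Order.join x s <= z) = all (fun y => y <= z) (x :: s).
Proof.
elim: s => [|y s IH] /=; first by rewrite andbT.
by rewrite leUx IH /= andbCA.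
Qed.

Lemma eq_by_lower {d} {L : latticeType d} (a b : L) :
  (forall z, (z <= a) = (z <= b)) -> a = b.
Proof.
move=> H; apply/le_anti; apply/andP; split.
  by rewrite -H lexx.
by rewrite H lexx.
Qed.

Lemma eq_by_upper {d} {L : latticeType d} (a b : L) :
  (forall z, (a <= z) = (b <= z)) -> a = b.
Proof.
move=> H; apply/le_anti; apply/andP; split.
  by rewrite H lexx.
by rewrite -H lexx.
Qed.

Lemma foldr_meet_le {d} {L : latticeType d} (x y : L) s :
  y \in x :: s -> foldr Order.meet x s <= y.
Proof.
move=> Hy; have := lexx (foldr Order.meet x s).
by rewrite le_foldr_meetE => /allP; apply.
Qed.

Lemma foldr_join_ge {d} {L : latticeType d} (x y : L) s :
  y \in x :: s -> y <= foldr Order.join x s.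
Proof.
move=> Hy; have := lexx (foldr Order.join x s).
by rewrite le_foldr_joinE => /allP; apply.
Qed.

Lemma ne_meet_eq {d} {L : latticeType d} (s t : seq L) :
  s =i t -> ne_meet s = ne_meet t.
Proof.
case: s => [|x s]; case: t => [|y t] //= H.
- by have := H y; rewrite !inE eqxx /=.
- by have := H x; rewrite !inE eqxx /=.
- congr Some; apply: eq_by_lower => z; rewrite !le_foldr_meetE.
  exact: eq_all_r.
Qed.

Lemma ne_join_eq {d} {L : latticeType d} (s t : seq L) :
  s =i t -> ne_join s = ne_join t.
Proof.
case: s => [|x s]; case: t => [|y t] //= H.
- by have := H y; rewrite !inE eqxx /=.
- by have := H x; rewrite !inE eqxx /=.
- congr Some; apply: eq_by_upper => z; rewrite !le_foldr_joinE.
  exact: eq_all_r.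
Qed.

Lemma bmeet_eq {d} {L : latticeType d} (X s t : seq L) :
  s =i t -> bmeet X s = bmeet X t.
Proof.
move=> H; rewrite /bmeet (ne_meet_eq H).
case: s H => [|x s]; case: t => [|y t] //= H.
- by have := H y; rewrite !inE eqxx /=.
- by have := H x; rewrite !inE eqxx /=.
Qed.

Lemma bjoin_eq {d} {L : latticeType d} (X s t : seq L) :
  s =i t -> bjoin X s = bjoin X t.
Proof.
move=> H; rewrite /bjoin (ne_join_eq H).
case: s H => [|x s]; case: t => [|y t] //= H.
- by have := H y; rewrite !inE eqxx /=.
- by have := H x; rewrite !inE eqxx /=.
Qed.

Lemma subseqs_sub {T : eqType} (W U : seq T) : U \in subseqs W -> {subset U <= W}.
Proof.
elim: W U => [|x W IH] U /=; first by rewrite inE => /eqP -> .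
rewrite mem_cat => /orP [/mapP [t Ht ->] | HU] y.
  rewrite !inE => /orP [-> //| /(IH _ Ht) H]; by rewrite H orbT.
by move/(IH _ HU) => H; rewrite inE H orbT.
Qed.

Lemma filter_subseqs {T : eqType} (p : pred T) (W : seq T) : filter p W \in subseqs W.
Proof.
elim: W => [|x W IH] /=; first by rewrite inE.
rewrite mem_cat; case: (p x).
  by rewrite (map_f (cons x) IH).
by rewrite IH orbT.
Qed.

Lemma mem_meets_of {d} {L : latticeType d} (X W : seq L) v :
  v \in meets_of X W <-> exists2 U, {subset U <= W} & bmeet X U = Some v.
Proof.
rewrite /meets_of mem_pmap; split.
  by case/mapP => U HU Hv; exists U => //; apply: subseqs_sub.
case=> U HU Hv; apply/mapP; exists (filter (fun y => y \in U) W).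
  exact: filter_subseqs.
rewrite -Hv; apply: bmeet_eq => y; rewrite mem_filter.
by case Hy: (y \in U) => //=; rewrite (HU _ Hy).
Qed.

Lemma mem_joins_of {d} {L : latticeType d} (X W : seq L) v :
  v \in joins_of X W <-> exists2 U, {subset U <= W} & bjoin X U = Some v.
Proof.
rewrite /joins_of mem_pmap; split.
  by case/mapP => U HU Hv; exists U => //; apply: subseqs_sub.
case=> U HU Hv; apply/mapP; exists (filter (fun y => y \in U) W).
  exact: filter_subseqs.
rewrite -Hv; apply: bjoin_eq => y; rewrite mem_filter.
by case Hy: (y \in U) => //=; rewrite (HU _ Hy).
Qed.

Lemma top_ge {d} {L : latticeType d} (X : seq L) t :
  generates X -> ne_join X = Some t -> forall a, a <= t.
Proof.
case: X => [|x0 X] // Hg [<-] a; elim: (Hg a) => {a} [a Ha | a b _ IHa _ IHb | a b _ IHa _ IHb].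
- exact: foldr_join_ge.
- exact: le_trans (leIl _ _) IHa.
- by rewrite leUx IHa IHb.
Qed.

Lemma bot_le {d} {L : latticeType d} (X : seq L) t :
  generates X -> ne_meet X = Some t -> forall a, t <= a.
Proof.
case: X => [|x0 X] // Hg [<-] a; elim: (Hg a) => {a} [a Ha | a b _ IHa _ IHb | a b _ IHa _ IHb].
- exact: foldr_meet_le.
- by rewrite lexI IHa IHb.
- exact: le_trans IHa (leUl _ _).
Qed.

Lemma foldr_meet_cat {d} {L : latticeType d} (x1 x2 : L) s1 s2 :
  foldr Order.meet x1 (s1 ++ x2 :: s2) = foldr Order.meet x1 s1 `&` foldr Order.meet x2 s2.
Proof.
apply: eq_by_lower => z; rewrite lexI !le_foldr_meetE /= all_cat /=.
by rewrite !andbA.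
Qed.

Lemma foldr_join_cat {d} {L : latticeType d} (x1 x2 : L) s1 s2 :
  foldr Order.join x1 (s1 ++ x2 :: s2) = foldr Order.join x1 s1 `|` foldr Order.join x2 s2.
Proof.
apply: eq_by_upper => z; rewrite leUx !le_foldr_joinE /= all_cat /=.
by rewrite !andbA.
Qed.

Lemma meets_closed {d} {L : latticeType d} (X W : seq L) u v :
  generates X -> u \in meets_of X W -> v \in meets_of X W -> u `&` v \in meets_of X W.
Proof.
move=> Hg /mem_meets_of [U1 HU1 Hu] /mem_meets_of [U2 HU2 Hv].
apply/mem_meets_of; exists (U1 ++ U2).
  by move=> y; rewrite mem_cat => /orP [/HU1 | /HU2].
case: U1 HU1 Hu => [|x1 s1] HU1 Hu.
  rewrite /= Hv; congr Some; symmetry; apply: meet_r; exact: (top_ge Hg Hu).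
case: U2 HU2 Hv => [|x2 s2] HU2 Hv.
  rewrite cats0 Hu; congr Some; symmetry; apply: meet_l; exact: (top_ge Hg Hv).
move: Hu Hv => /= [<-] [<-]; by rewrite foldr_meet_cat.
Qed.

Lemma joins_closed {d} {L : latticeType d} (X W : seq L) u v :
  generates X -> u \in joins_of X W -> v \in joins_of X W -> u `|` v \in joins_of X W.
Proof.
move=> Hg /mem_joins_of [U1 HU1 Hu] /mem_joins_of [U2 HU2 Hv].
apply/mem_joins_of; exists (U1 ++ U2).
  by move=> y; rewrite mem_cat => /orP [/HU1 | /HU2].
case: U1 HU1 Hu => [|x1 s1] HU1 Hu.
  rewrite /= Hv; congr Some; symmetry; apply: join_r; exact: (bot_le Hg Hu).
case: U2 HU2 Hv => [|x2 s2] HU2 Hv.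
  rewrite cats0 Hu; congr Some; symmetry; apply: join_l; exact: (bot_le Hg Hv).
move: Hu Hv => /= [<-] [<-]; by rewrite foldr_join_cat.
Qed.

Lemma sub_meets {d} {L : latticeType d} (X W : seq L) : {subset W <= meets_of X W}.
Proof.
by move=> v Hv; apply/mem_meets_of; exists [:: v] => // y; rewrite inE => /eqP ->.
Qed.

Lemma sub_joins {d} {L : latticeType d} (X W : seq L) : {subset W <= joins_of X W}.
Proof.
by move=> v Hv; apply/mem_joins_of; exists [:: v] => // y; rewrite inE => /eqP ->.
Qed.

Lemma Gs_Hs {d} {L : latticeType d} (X : seq L) k : {subset Gs X k <= Hs X k}.
Proof. exact: sub_meets. Qed.

Lemma Hs_Gs {d} {L : latticeType d} (X : seq L) k : {subset Hs X k <= Gs X k.+1}.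
Proof. exact: sub_joins. Qed.

Lemma Hs_mono {d} {L : latticeType d} (X : seq L) m n :
  (m <= n)%N -> {subset Hs X m <= Hs X n}.
Proof.
elim: n => [|n IH]; first by rewrite leqn0 => /eqP ->.
rewrite leq_eqVlt => /orP [/eqP -> //| Hlt] v Hv.
apply: Gs_Hs; apply: Hs_Gs; exact: IH.
Qed.

Lemma Hs_meet {d} {L : latticeType d} (X : seq L) k u v :
  generates X -> u \in Hs X k -> v \in Hs X k -> u `&` v \in Hs X k.
Proof. exact: meets_closed. Qed.

Lemma Gs_join {d} {L : latticeType d} (X : seq L) k u v :
  generates X -> u \in Gs X k.+1 -> v \in Gs X k.+1 -> u `|` v \in Gs X k.+1.
Proof. exact: joins_closed. Qed.

Lemma all_in_Hs {d} {L : latticeType d} (X : seq L) :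
  generates X -> forall a, exists n, a \in Hs X n.
Proof.
move=> Hg a; elim: (Hg a) => {a} [a Ha | a b _ [n1 H1] _ [n2 H2] | a b _ [n1 H1] _ [n2 H2]].
- by exists 0%N; apply: Gs_Hs.
- exists (maxn n1 n2); apply: Hs_meet => //.
    exact: Hs_mono (leq_maxl _ _) _ H1.
  exact: Hs_mono (leq_maxr _ _) _ H2.
- exists (maxn n1 n2).+1; apply: Gs_Hs; apply: Gs_join => //; apply: Hs_Gs.
    exact: Hs_mono (leq_maxl _ _) _ H1.
  exact: Hs_mono (leq_maxr _ _) _ H2.
Qed.

Lemma hom_mono {d1 d2} {L1 : latticeType d1} {L2 : latticeType d2} (f : L1 -> L2) :
  lattice_hom f -> forall x y, x <= y -> f x <= f y.
Proof.
case=> Hm _ x y; rewrite !leEmeet => /eqP Hxy.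
by rewrite -Hm Hxy.
Qed.

Lemma bound_seq {d} {L : latticeType d} (X s : seq L) :
  generates X -> exists M, forall b, b \in s -> b \in Hs X M.
Proof.
move=> Hg; elim: s => [|b s [M HM]]; first by exists 0%N.
have [n Hn] := all_in_Hs Hg b.
exists (maxn n M) => y; rewrite inE => /orP [/eqP -> | Hy].
  exact: Hs_mono (leq_maxl _ _) _ Hn.
exact: Hs_mono (leq_maxr _ _) _ (HM _ Hy).
Qed.

Lemma join_list {dA dB dD} {A : latticeType dA} {B : latticeType dB} {D : latticeType dD}
  (g : A -> D) (h : B -> D) (Y : seq B) j (b : B) (x : A) (L : seq A) :
  lattice_hom g -> lattice_hom h -> generates Y ->
  (forall u, u \in x :: L -> exists c, [/\ c \in Hs Y j, g u <= h c & c <= b]) ->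
  exists c, [/\ c \in Gs Y j.+1, g (foldr Order.join x L) <= h c & c <= b].
Proof.
move=> Hg Hh HY; elim: L => [|y L IH] H /=.
  have [|c [H1 H2 H3]] := H x; first by rewrite inE.
  by exists c; split => //; apply: Hs_Gs.
have [|c1 [H1 H2 H3]] := H y; first by rewrite !inE eqxx orbT.
have [|c2 [H4 H5 H6]] := IH.
  by move=> u; rewrite inE => /orP [/eqP ->|Hu]; apply: H; rewrite !inE ?eqxx ?Hu ?orbT.
exists (c1 `|` c2); split.
- by apply: Gs_join => //; apply: Hs_Gs.
- rewrite Hg.2 Hh.2 leUx; apply/andP; split.
    exact: le_trans H2 (leUl _ _).
  exact: le_trans H5 (leUr _ _).
- by rewrite leUx H3 H6.
Qed.

Lemma R_lemma {dA dB dD} {A : latticeType dA} {B : latticeType dB} {D : latticeType dD}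
  (X : seq A) (Y : seq B) (g : A -> D) (h : B -> D) (Z : seq (A * B)) M :
  lattice_hom g -> lattice_hom h -> generates Y -> (forall x, x \in X -> join_prime x) ->
  (forall z, z \in Z -> g z.1 = h z.2) -> (forall z, z \in Z -> z.2 \in Hs Y M) ->
  forall p, sublat_gen Z p -> forall x, x \in X -> x <= p.1 ->
    exists c, [/\ c \in Hs Y M, g x <= h c & c <= p.2].
Proof.
move=> Hg Hh HY Hjp HZ HM p.
elim=> {p} [p Hp | p q _ IHp _ IHq | p q _ IHp _ IHq] x Hx /=.
- move=> Hxp; exists p.2; split => //; first exact: HM.
  by rewrite -HZ //; apply: hom_mono.
- rewrite lexI => /andP [H1 H2].
  have [c1 [C1 C2 C3]] := IHp x Hx H1; have [c2 [C4 C5 C6]] := IHq x Hx H2.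
  exists (c1 `&` c2); split.
  + exact: Hs_meet.
  + by rewrite Hh.1 lexI C2 C5.
  + rewrite lexI; apply/andP; split.
      exact: le_trans (leIl _ _) C3.
    exact: le_trans (leIr _ _) C6.
- case/(Hjp x Hx) => H.
    have [c [C1 C2 C3]] := IHp x Hx H; exists c; split => //.
    exact: le_trans C3 (leUl _ _).
  have [c [C1 C2 C3]] := IHq x Hx H; exists c; split => //.
  exact: le_trans C3 (leUr _ _).
Qed.

Lemma top_lemma {dA dB dD} {A : latticeType dA} {B : latticeType dB} {D : latticeType dD}
  (X : seq A) (Y : seq B) (g : A -> D) (h : B -> D) M (p : A * B) w :
  lattice_hom g -> lattice_hom h -> generates Y ->
  (forall x, x \in X -> x <= p.1 -> exists c, [/\ c \in Hs Y M, g x <= h c & c <= p.2]) ->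
  ne_join X = Some w -> w <= p.1 ->
  forall k, exists c, [/\ c \in Hs Y (k + M.+1), g w <= h c & c <= p.2].
Proof.
move=> Hg Hh HY HR; case: X HR => [|x0 X] // HR [<-] Hw k.
have [|c [C1 C2 C3]] := join_list (x := x0) (L := X) (j := M) (b := p.2) Hg Hh HY.
  move=> u Hu; apply: HR => //; apply: le_trans Hw; exact: foldr_join_ge.
exists c; split => //; apply: Hs_mono (leq_addl _ _) _ _; exact: Gs_Hs.
Qed.

Theorem mainTheorem12 (dA dB dD : Order.disp_t)
  (A : latticeType dA) (B : latticeType dB) (D : latticeType dD)
  (X : seq A) (Y : seq B) (g : A -> D) (h : B -> D) :
  generates X -> (forall x, x \in X -> join_prime x) -> whitman A ->
  generates Y -> epimorphism g -> epimorphism h ->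
  forall Z : seq (A * B), (forall z, z \in Z -> g z.1 = h z.2) ->
  exists N : nat, forall (a : A) (b : B), sublat_gen Z (a, b) ->
    forall (k : nat) (w : A), w \in Hs X k -> w <= a ->
      exists2 bt : B, beta Y h (k + N) (g w) = Some bt & bt <= b.
Proof.
move=> HgX Hjp HW HgY [Hg _] [Hh _] Z HZ.
have [M HM0] := bound_seq (map snd Z) HgY.
have HM : forall z, z \in Z -> z.2 \in Hs Y M.
  by move=> z Hz; apply: HM0; apply: map_f.
have HR := R_lemma Hg Hh HgY Hjp HZ HM.
have Inv : forall p, sublat_gen Z p -> forall k w, w \in Hs X k -> w <= p.1 ->
    exists c, [/\ c \in Hs Y (k + M.+1), g w <= h c & c <= p.2].
  move=> p Hp0; elim: Hp0 (Hp0) => {p} [p Hp | p q Hp IHp Hq IHq | p q Hp IHp Hq IHq] Hpq k w Hw Hwp.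
  - exists p.2; split.
    + by apply: (Hs_mono _ (HM _ Hp)); rewrite addnS ltnW // ltnS leq_addl.
    + by rewrite -HZ //; apply: hom_mono.
    + exact: lexx.
  - move: Hwp; rewrite /= lexI => /andP [H1 H2].
    have [c1 [C1 C2 C3]] := IHp Hp k w Hw H1; have [c2 [C4 C5 C6]] := IHq Hq k w Hw H2.
    exists (c1 `&` c2); split.
    + exact: Hs_meet.
    + by rewrite Hh.1 lexI C2 C5.
    + rewrite lexI; apply/andP; split.
        exact: le_trans (leIl _ _) C3.
      exact: le_trans (leIr _ _) C6.
  - have side : forall k w, w \in Hs X k -> w <= p.1 \/ w <= q.1 ->
        exists c, [/\ c \in Hs Y (k + M.+1), g w <= h c & c <= (pjoin p q).2].
      move=> k' w' Hw' [H | H].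
        have [c [C1 C2 C3]] := IHp Hp k' w' Hw' H; exists c; split => //.
        exact: le_trans C3 (leUl _ _).
      have [c [C1 C2 C3]] := IHq Hq k' w' Hw' H; exists c; split => //.
      exact: le_trans C3 (leUr _ _).
    elim: k w Hw Hwp => [|k IHk] w Hw Hwp; case/mem_meets_of: Hw => U HU Hb.
    + case: U HU Hb => [|s0 S] HU Hb.
        apply: top_lemma Hg Hh HgY _ Hb Hwp 0%N; exact: HR.
      move: Hb => /= [Hb]; subst w.
      have := HW s0 p.1 S [:: q.1]; rewrite /= joinC => /(_ Hwp).
      case=> [[s Hs Hsle] | [t Ht Hwt]].
        apply: side; first by apply/mem_meets_of; exists (s0 :: S).
        have Hws := foldr_meet_le Hs.
        by case: (Hjp s (HU s Hs) _ _ Hsle) => H; [left|right]; exact: le_trans Hws H.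
      apply: side; first by apply/mem_meets_of; exists (s0 :: S).
      by move: Ht; rewrite !inE => /orP [/eqP Ht | /eqP Ht]; subst t; [left|right].
    + case: U HU Hb => [|s0 S] HU Hb.
        apply: top_lemma Hg Hh HgY _ Hb Hwp k.+1; exact: HR.
      move: Hb => /= [Hb]; subst w.
      have HwHs : foldr Order.meet s0 S \in Hs X k.+1.
        by apply/mem_meets_of; exists (s0 :: S).
      have := HW s0 p.1 S [:: q.1]; rewrite /= joinC => /(_ Hwp).
      case=> [[s Hs Hsle] | [t Ht Hwt]]; last first.
        apply: side => //.
        by move: Ht; rewrite !inE => /orP [/eqP Ht | /eqP Ht]; subst t; [left|right].
      have Hws := foldr_meet_le Hs.
      case/mem_joins_of: (HU s Hs) => V HV Hs'.
      case: V HV Hs' => [|u0 V] HV Hs'.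
        apply: side => //; left; apply: le_trans Hws _.
        exact: bot_le HgX Hs' _.
      move: Hs' => /= [Hs']; subst s.
      have [|c [C1 C2 C3]] := join_list (x := u0) (L := V) (j := k + M.+1)
                                  (b := (pjoin p q).2) Hg Hh HgY.
        move=> u Hu; apply: IHk; first exact: HV.
        apply: le_trans Hsle; exact: foldr_join_ge.
      exists c; split => //.
      * by rewrite addSn; apply: Gs_Hs.
      * exact: le_trans (hom_mono Hg Hws) C2.
exists M.+1 => a b Hab k w Hw Hwa.
have [c [C1 C2 C3]] := Inv _ Hab k w Hw Hwa.
rewrite /beta.
have Hc : c \in [seq u <- Hs Y (k + M.+1) | g w <= h u] by rewrite mem_filter C2 C1.
case E: [seq u <- Hs Y (k + M.+1) | g w <= h u] Hc => [|f0 F] //= Hc.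
eexists; first reflexivity.
apply: le_trans C3; exact: foldr_meet_le.
Qed.
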